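(* Let $\mathcal{H}$ be a real Hilbert space of dimension $d>1$, $G>0$, $\mathcal{G}=\{g\in\mathcal{H}:\|g\|\le G\}$, $\theta\in\mathcal{H}$ fixed, and $h:\mathbb{R}\to\mathbb{R}$ an even convex function that is increasing on $[0,\infty)$. Then \[ \min_{w\in\mathcal{H}}\max_{g\in\mathcal{G}}\ \langle w,g\rangle+h(\|\theta-g\|)\ \ge\ h\Big(\sqrt{\|\theta\|^2+G^2}\Big). \] *)

(* Defs.v *)
(* the finite-dimensional real Hilbert space of dimension d
   is modelled (up to isometric isomorphism) as row vectors 'rV[R]_d with the
   standard inner product, over an arbitrary realType R. *)
From mathcomp Require Import all_boot all_order all_algebra.
From mathcomp Require Import reals.
Set Implicit Arguments. Unset Strict Implicit. Unset Printing Implicit Defensive.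
Import Order.TTheory GRing.Theory Num.Theory.
Local Open Scope ring_scope.

Definition dotv (R : comRingType) (d : nat) (u v : 'rV[R]_d) : R :=
  (u *m v^T) 0 0.

Definition normv (R : rcfType) (d : nat) (u : 'rV[R]_d) : R :=
  Num.sqrt (dotv u u).

Definition convex_fun (R : realFieldType) (h : R -> R) : Prop :=
  forall (x y t : R), 0 <= t -> t <= 1 ->
    h (t * x + (1 - t) * y) <= t * h x + (1 - t) * h y.

Definition even_fun (R : ringType) (h : R -> R) : Prop :=
  forall x, h (- x) = h x.

Definition incr_on_nonneg (R : realDomainType) (h : R -> R) : Prop :=
  forall x y, 0 <= x -> x <= y -> h x <= h y.

(* Main.v *)
Require Import Defs.
From mathcomp Require Import all_boot all_order all_algebra.
From mathcomp Require Import reals.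
From mathcomp Require Import ring lra.
Import Order.TTheory GRing.Theory Num.Theory.
Local Open Scope ring_scope.

Section Aux.
Variable R : realType.
Variable d : nat.
Implicit Types u v x : 'rV[R]_d.

Lemma dotvE u v : dotv u v = \sum_i u 0 i * v 0 i.
Proof. by rewrite /dotv !mxE; apply: eq_bigr => i _; rewrite mxE. Qed.

Lemma dotvC u v : dotv u v = dotv v u.
Proof. by rewrite !dotvE; apply: eq_bigr => i _; rewrite mulrC. Qed.

Lemma dotvDl u v x : dotv (u + v) x = dotv u x + dotv v x.
Proof. by rewrite /dotv mulmxDl mxE. Qed.

Lemma dotvZl (a : R) u x : dotv (a *: u) x = a * dotv u x.
Proof. by rewrite /dotv -scalemxAl mxE. Qed.

Lemma dotvDr u v x : dotv x (u + v) = dotv x u + dotv x v.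
Proof. by rewrite dotvC dotvDl !(dotvC x). Qed.

Lemma dotvZr (a : R) u x : dotv x (a *: u) = a * dotv x u.
Proof. by rewrite dotvC dotvZl (dotvC x). Qed.

Lemma dotv_ge_sq u k : u 0 k * u 0 k <= dotv u u.
Proof.
rewrite dotvE (bigD1 k) //= lerDl; apply: sumr_ge0 => i _.
by rewrite -expr2 sqr_ge0.
Qed.

Lemma dotv_ge0 u : 0 <= dotv u u.
Proof.
rewrite dotvE; apply: sumr_ge0 => i _; by rewrite -expr2 sqr_ge0.
Qed.

Lemma key (G : R) (hG : 0 < G) (theta w u : 'rV[R]_d) (h : R -> R) (c : R) :
  dotv u theta = 0 -> c ^+ 2 * dotv u u = G ^+ 2 -> 0 <= c * dotv w u ->
  exists2 g : 'rV[R]_d, normv g <= G &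
      h (Num.sqrt (normv theta ^+ 2 + G ^+ 2)) <= dotv w g + h (normv (theta - g)).
Proof.
move=> hut hc hw; exists (c *: u).
  rewrite /normv dotvZl dotvZr mulrA -expr2 hc sqrtr_sqr ger0_norm //.
  exact: ltW.
have -> : normv (theta - c *: u) = Num.sqrt (normv theta ^+ 2 + G ^+ 2).
  rewrite /normv sqr_sqrtr ?dotv_ge0 //; congr Num.sqrt.
  rewrite -scaleNr dotvDl !dotvDr !dotvZl !dotvZr (dotvC theta u) hut -hc.
  ring.
by rewrite dotvZr lerDr.
Qed.

End Aux.

Theorem lemma13 (R : realType) (d : nat) (hd : (1 < d)%N)
  (G : R) (hG : 0 < G) (theta : 'rV[R]_d) (h : R -> R)
  (h_even : even_fun h) (h_convex : convex_fun h) (h_incr : incr_on_nonneg h) :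
  forall w : 'rV[R]_d,
    exists2 g : 'rV[R]_d, normv g <= G &
      h (Num.sqrt (normv theta ^+ 2 + G ^+ 2)) <= dotv w g + h (normv (theta - g)).
Proof.
move=> w.
have [u hut hpos] : exists2 u : 'rV[R]_d, dotv u theta = 0 & 0 < dotv u u.
  case: d hd theta w => [|[|n]] // _ theta w.
  pose i0 : 'I_n.+2 := ord0.
  pose i1 : 'I_n.+2 := @Ordinal n.+2 1 isT.
  have d0 i : dotv (delta_mx 0 i) theta = theta 0 i.
    by rewrite /dotv -rowE !mxE.
  have e00 i : (delta_mx 0 i : 'rV[R]_n.+2) 0 i = 1 by rewrite mxE !eqxx.
  have e01 : (delta_mx 0 i1 : 'rV[R]_n.+2) 0 i0 = 0 by rewrite mxE.
  have e10 : (delta_mx 0 i0 : 'rV[R]_n.+2) 0 i1 = 0 by rewrite mxE.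
  have [z|nz] := eqVneq (theta 0 i0) 0.
    exists (delta_mx 0 i0); first by rewrite d0.
    have := @dotv_ge_sq R _ (delta_mx 0 i0 : 'rV[R]_n.+2) i0; rewrite e00; lra.
  exists (theta 0 i1 *: delta_mx 0 i0 - theta 0 i0 *: delta_mx 0 i1).
    by rewrite -scaleNr dotvDl !dotvZl !d0; ring.
  set u := (_ - _).
  have := @dotv_ge_sq R _ u i1.
  have -> : u 0 i1 = - theta 0 i0 by rewrite /u !mxE !eqxx /=; ring.
  have : 0 < theta 0 i0 ^+ 2 by rewrite exprn_even_gt0.
  nra.
set q := dotv u u.
have rq : 0 < Num.sqrt q by rewrite sqrtr_gt0.
have hq : Num.sqrt q ^+ 2 = q by rewrite sqr_sqrtr // ltW.
move: rq hq; set r := Num.sqrt q => rq hq.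
have [hw|hw] := lerP 0 (dotv w u).
  apply: (@key R _ G hG theta w u h (G / r)) => //.
    rewrite -/q -hq; field; exact: lt0r_neq0.
  apply: mulr_ge0 => //; apply: divr_ge0; exact: ltW.
apply: (@key R _ G hG theta w u h (- (G / r))) => //.
  rewrite -/q -hq; field; exact: lt0r_neq0.
rewrite mulNr -mulrN; apply: mulr_ge0; last by rewrite oppr_ge0 ltW.
apply: divr_ge0; exact: ltW.
Qed.
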